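(* Let $B \in M_m \otimes M_n$ (a real matrix, not necessarily symmetric). Then \[ \mu_{\min}(B) \ge W^{1+i}_{\min}(B) \quad\text{and}\quad \mu_{\max}(B) \le W^{1+i}_{\max}(B). \]
   Context: $M_n$ denotes real $n\times n$ matrices and $M_m\otimes M_n$ is identified with $M_{mn}$ via the Kronecker product. For $A = \sum_j X_j \otimes Y_j \in M_m\otimes M_n$, the partial transpose is the linear map $A^\Gamma = \sum_j X_j \otimes Y_j^T$. For $B \in M_m\otimes M_n$, $\mu_{\min}(B) = \min\{(\mathbf{v}\otimes\mathbf{w})^T B(\mathbf{v}\otimes\mathbf{w}) : \mathbf{v}\in\mathbb{R}^m,\mathbf{w}\in\mathbb{R}^n, \|\mathbf{v}\|=\|\mathbf{w}\|=1\}$ and $\mu_{\max}(B)$ is the corresponding maximum. The numerical range of a complex matrix $A\in M_N(\mathbb{C})$ is $W(A) = \{\mathbf{x}^*A\mathbf{x} : \mathbf{x}\in\mathbb{C}^N, \|\mathbf{x}\|=1\}$. Define $W^{1+i}(B) = \{c\in\mathbb{R} : c(1+i) \in W(B + iB^\Gamma)\}$; this is a nonempty compact interval, and $W^{1+i}_{\min}(B)$, $W^{1+i}_{\max}(B)$ denote its minimum and maximum. *)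

(* Defs.v *)
From HB Require Import structures.
From mathcomp Require Import all_boot all_order all_algebra.
From mathcomp Require Import classical_sets reals.
From mathcomp Require Import complex mxtens.

Set Implicit Arguments.
Unset Strict Implicit.
Unset Printing Implicit Defensive.

Import Order.TTheory GRing.Theory Num.Theory.
Local Open Scope ring_scope.
Local Open Scope classical_set_scope.

(* M_m (x) M_n is identified with 'M_(m*n) via the Kronecker product:
   the row/column index (i,k) in 'I_m * 'I_n corresponds to i*n + k
   (mxtens_index), and A *t B (tensmx) is the Kronecker product. *)

(* Partial transpose: the linear map  X (x) Y |-> X (x) Y^T, applied to the
   expansion of A in Kronecker products of matrix units
   A = \sum A_{(i,k),(j,l)} E_ij (x) E_kl. *)
Definition ptrans (R : pzRingType) (m n : nat) (A : 'M[R]_(m * n)) : 'M[R]_(m * n) :=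
  \sum_(i < m) \sum_(j < m) \sum_(k < n) \sum_(l < n)
     A (mxtens_index (i, k)) (mxtens_index (j, l))
       *: tensmx (delta_mx i j) (delta_mx k l)^T.

Definition unit_rvec (R : realType) (p : nat) (v : 'cV[R]_p) : Prop :=
  \sum_(i < p) v i 0 ^+ 2 = 1.

Definition qform (R : pzRingType) (N : nat) (B : 'M[R]_N) (x : 'cV[R]_N) : R :=
  (x^T *m B *m x) 0 0.

Definition prod_values (R : realType) (m n : nat) (B : 'M[R]_(m * n)) : set R :=
  [set t | exists (v : 'cV[R]_m) (w : 'cV[R]_n),
     unit_rvec v /\ unit_rvec w /\ t = qform B (tensmx v w)].

(* mu_min / mu_max: the minimum / maximum of the above (compact) set;
   written as inf / sup, which equal min / max since the set is compact
   and nonempty for m, n >= 1. *)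
Definition mu_min (R : realType) (m n : nat) (B : 'M[R]_(m * n)) : R :=
  inf (prod_values B).
Definition mu_max (R : realType) (m n : nat) (B : 'M[R]_(m * n)) : R :=
  sup (prod_values B).

Definition numrange (R : realType) (N : nat) (A : 'M[R[i]]_N) : set R[i] :=
  [set z | exists x : 'cV[R[i]]_N,
     \sum_(k < N) `|x k 0| ^+ 2 = 1 /\
     z = ((map_mx (@conjc R) x)^T *m A *m x) 0 0].

Definition cplx_mx (R : realType) (p q : nat) (A : 'M[R]_(p, q)) : 'M[R[i]]_(p, q) :=
  map_mx (fun r : R => (r%:C)%C) A.

Definition W1i (R : realType) (m n : nat) (B : 'M[R]_(m * n)) : set R :=
  [set c | numrange (cplx_mx B + (Complex 0 1) *: cplx_mx (ptrans B))
             ((c%:C)%C * (1 + Complex 0 1))].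

(* Its minimum and maximum (it is a nonempty compact interval). *)
Definition W1i_min (R : realType) (m n : nat) (B : 'M[R]_(m * n)) : R := inf (W1i B).
Definition W1i_max (R : realType) (m n : nat) (B : 'M[R]_(m * n)) : R := sup (W1i B).

(* Main.v *)
Require Import Defs.
From HB Require Import structures.
From mathcomp Require Import all_boot all_order all_algebra.
From mathcomp Require Import classical_sets reals.
From mathcomp Require Import complex mxtens lra.
Import Order.TTheory GRing.Theory Num.Theory.
Local Open Scope ring_scope.
Local Open Scope classical_set_scope.

Lemma sum_tens_idx (V : nmodType) m n (F : 'I_(m * n) -> V) :
  \sum_(a < m * n) F a = \sum_(i < m) \sum_(k < n) F (mxtens_index (i, k)).
Proof.
rewrite pair_big /=. rewrite (reindex (@mxtens_index m n)) /=.
  by apply: eq_bigr => -[].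
by exists (@mxtens_unindex m n) => x _; rewrite (mxtens_indexK, mxtens_unindexK).
Qed.

Section Aux.
Variable R : comPzRingType.

Lemma delta_tens m n (i j : 'I_m) (k l : 'I_n) :
  delta_mx (mxtens_index (i, k)) (mxtens_index (j, l)) =
  delta_mx i j *t delta_mx k l :> 'M[R]_(m * n).
Proof.
apply/matrixP => a b; case: (mxtens_indexP a) => a1 a2; case: (mxtens_indexP b) => b1 b2.
rewrite tensmxE !mxE !(inj_eq (can_inj (@mxtens_indexK m n))) !xpair_eqE.
by case: (a1 == i); case: (a2 == k); case: (b1 == j); case: (b2 == l); rewrite /= ?mulr1 ?mulr0 ?mul0r.
Qed.

Lemma tens11 (P Q : 'M[R]_1) (a b : 'I_(1 * 1)) : (P *t Q) a b = P 0 0 * Q 0 0.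
Proof.
case: (mxtens_indexP a) => a1 a2; case: (mxtens_indexP b) => b1 b2.
by rewrite tensmxE [a1]ord1 [a2]ord1 [b1]ord1 [b2]ord1.
Qed.

Lemma qdelta p (u : 'cV[R]_p) i j : (u^T *m delta_mx i j *m u) 0 0 = u i 0 * u j 0.
Proof.
rewrite -(mul_delta_mx (0 : 'I_1) i j) mulmxA -colE -mulmxA -rowE.
by rewrite !mxE big_ord1 !mxE.
Qed.

Lemma qform_tens m n (X : 'M[R]_m) (Y : 'M[R]_n) (v : 'cV[R]_m) (w : 'cV[R]_n) :
  qform (X *t Y) (v *t w) = qform X v * qform Y w.
Proof.
rewrite /qform (trmx_tens v w) (tensmx_mul v^T w^T X Y) (tensmx_mul (v^T *m X) (w^T *m Y) v w).
by rewrite tens11.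
Qed.

Lemma mx_expand m n (B : 'M[R]_(m * n)) :
  B = \sum_(i < m) \sum_(j < m) \sum_(k < n) \sum_(l < n)
     B (mxtens_index (i, k)) (mxtens_index (j, l)) *: (delta_mx i j *t delta_mx k l).
Proof.
rewrite {1}[B]matrix_sum_delta (@sum_tens_idx _ m n).
apply: eq_bigr => i _; rewrite exchange_big /= (@sum_tens_idx _ m n).
apply: eq_bigr => j _; rewrite exchange_big /=; apply: eq_bigr => k _; apply: eq_bigr => l _.
by rewrite delta_tens.
Qed.

Lemma qform_lin N (F : nat -> 'M[R]_N) : True. Proof. by []. Qed.

Lemma qformD N (A C : 'M[R]_N) x : qform (A + C) x = qform A x + qform C x.
Proof. by rewrite /qform mulmxDr mulmxDl mxE. Qed.
Lemma qformZ N (c : R) (A : 'M[R]_N) x : qform (c *: A) x = c * qform A x.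
Proof. by rewrite /qform -scalemxAr -scalemxAl mxE. Qed.
Lemma qform_sum N I (r : seq I) (P : pred I) (F : I -> 'M[R]_N) x :
  qform (\sum_(i <- r | P i) F i) x = \sum_(i <- r | P i) qform (F i) x.
Proof.
apply: (big_morph (fun A => qform A x)) => [A C|]; first exact: qformD.
by rewrite /qform mulmx0 mul0mx mxE.
Qed.

Lemma key m n (B : 'M[R]_(m * n)) (v : 'cV[R]_m) (w : 'cV[R]_n) :
  qform (ptrans B) (v *t w) = qform B (v *t w).
Proof.
rewrite {2}[B]mx_expand /ptrans !qform_sum.
apply: eq_bigr => i _; rewrite !qform_sum; apply: eq_bigr => j _.
rewrite !qform_sum; apply: eq_bigr => k _; rewrite !qform_sum; apply: eq_bigr => l _.
rewrite !qformZ !qform_tens trmx_delta /qform !qdelta; congr (_ * _).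
by rewrite [w l 0 * _]mulrC.
Qed.
End Aux.
Section Cplx.
Variable R : realType.
Local Open Scope complex_scope.

Lemma tensv m n (v : 'cV[R]_m) (w : 'cV[R]_n) i k :
  (v *t w : 'cV[R]_(m * n)) (mxtens_index (i, k)) 0 = v i 0 * w k 0.
Proof.
rewrite mxE mxtens_indexK /=.
by congr (v i _ * w k _); apply: val_inj.
Qed.

Lemma cplx_mul p q r (A : 'M[R]_(p, q)) (C : 'M[R]_(q, r)) :
  cplx_mx (A *m C) = cplx_mx A *m cplx_mx C.
Proof. exact: (map_mxM (real_complex R)). Qed.

Lemma normC2 (r : R) : `|r%:C| ^+ 2 = (r ^+ 2)%:C.
Proof. by rewrite -add_Re2_Im2 /= expr0n /= addr0. Qed.

Lemma normJ (x : R[i]) : `|x^*| = `|x|.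
Proof. by case: x => a b; rewrite !normc_def /= sqrrN. Qed.

Lemma cplx_q N (M : 'M[R]_N) (y : 'cV[R]_N) :
  ((cplx_mx y)^T *m cplx_mx M *m cplx_mx y) 0 0 = (qform M y)%:C.
Proof.
by rewrite /cplx_mx map_trmx -!(map_mxM (real_complex R)) mxE.
Qed.

Lemma in_W1i m n (B : 'M[R]_(m * n)) (v : 'cV[R]_m) (w : 'cV[R]_n) :
  unit_rvec v -> unit_rvec w -> W1i B (qform B (v *t w)).
Proof.
move=> hv hw; rewrite /W1i /numrange.
exists (cplx_mx (v *t w)); split.
  under eq_bigr do rewrite mxE normC2.
  rewrite -rmorph_sum (@sum_tens_idx _ m n).
  under eq_bigr do under eq_bigr do rewrite tensv exprMn.
  under eq_bigr do rewrite -mulr_sumr.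
  by rewrite -mulr_suml -/(unit_rvec v) -/(unit_rvec w) hv hw mulr1.
have -> : map_mx conjc (cplx_mx (v *t w)) = cplx_mx (v *t w).
  by apply/matrixP => a b; rewrite !mxE conjc_real.
rewrite mulmxDr mulmxDl -scalemxAr -scalemxAl mxE [in X in _ = _ + X]mxE.
rewrite (@cplx_q _ B (v *t w)) (@cplx_q _ (ptrans B) (v *t w)) key.
by rewrite mulrDr mulr1 mulrC.
Qed.

Lemma sq_le1 N (x : 'cV[R[i]]_N) a :
  \sum_(k < N) `|x k 0| ^+ 2 = 1 -> `|x a 0| <= 1.
Proof.
move=> hx; rewrite -(@expr_le1 _ 2) //.
rewrite -hx (bigD1 a) //= lerDl; apply: sumr_ge0 => k _; exact: exprn_ge0.
Qed.

Lemma W1i_bound m n (B : 'M[R]_(m * n)) : exists K, forall c, W1i B c -> `|c| <= K.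
Proof.
set A := cplx_mx B + 'i *: cplx_mx (ptrans B).
set S : R[i] := \sum_(a < m * n) \sum_(b < m * n) `|A a b|.
have S0 : 0 <= S by apply: sumr_ge0 => a _; apply: sumr_ge0 => b _.
have SK : S = (complex.Re S)%:C by rewrite RRe_real // ger0_real.
have K0 : 0 <= complex.Re S by rewrite -ler0c -SK.
exists (complex.Re S) => c [x [hx hz]].
set z := _ 0 0 in hz.
have hzS : `|z| <= S.
  rewrite /z !mxE; under eq_bigr do rewrite mxE mulr_suml.
  rewrite exchange_big /=; apply: le_trans (ler_norm_sum _ _ _) _.
  apply: ler_sum => a _; apply: le_trans (ler_norm_sum _ _ _) _.
  apply: ler_sum => b _; rewrite !normrM !mxE normJ.
  rewrite -[X in _ <= X]mul1r -[X in _ <= X]mulr1.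
  apply: ler_pM; rewrite ?mulr_ge0 ?normr_ge0 ?sq_le1 //.
  by apply: ler_wpM2r; rewrite ?normr_ge0 ?sq_le1.
have h2 : `|z| ^+ 2 <= S ^+ 2 by rewrite !expr2; apply: ler_pM.
rewrite -add_Re2_Im2 SK -rmorphXn lecR -hz in h2.
have e : c%:C * (1 + 'i%C) = Complex c c.
  by apply/eqP; rewrite eq_complex /= !addr0 !add0r mulr1 !mul0r subr0 addr0 eqxx.
rewrite e /= in h2.
case: (lerP 0 c) => hc; [rewrite ger0_norm // | rewrite ltr0_norm //]; nra.
Qed.
End Cplx.

Lemma unit_delta (R : realType) p (i0 : 'I_p) : unit_rvec (delta_mx i0 0 : 'cV[R]_p).
Proof.
rewrite /unit_rvec (bigD1 i0) //= big1 ?addr0 => [|i hi]; rewrite mxE ?eqxx.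
  by rewrite expr1n.
by rewrite (negbTE hi) expr0n.
Qed.

Theorem theorem3p1 (R : realType) (m n : nat) (hm : (0 < m)%N) (hn : (0 < n)%N)
    (B : 'M[R]_(m * n)) :
  W1i_min B <= mu_min B /\ mu_max B <= W1i_max B.
Proof.
have sub : forall t, prod_values B t -> W1i B t.
  by move=> t [v [w [hv [hw ->]]]]; apply: in_W1i.
have ne : exists t, prod_values B t.
  exists (qform B ((delta_mx (Ordinal hm) (0 : 'I_1) : 'cV[R]_m) *t (delta_mx (Ordinal hn) (0 : 'I_1) : 'cV[R]_n))).
  exists (delta_mx (Ordinal hm) 0), (delta_mx (Ordinal hn) 0).
  by split; [exact: unit_delta | split; [exact: unit_delta | by []]].
have [K hK] := @W1i_bound R m n B.
have hl : has_lbound (W1i B).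
  by exists (- K) => c /hK; rewrite ler_norml => /andP[].
have hu : has_ubound (W1i B).
  by exists K => c /hK; rewrite ler_norml => /andP[].
split.
  apply: lb_le_inf => // t /sub; exact: ge_inf.
apply: ge_sup => // t /sub; exact: ub_le_sup.
Qed.
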